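(* For any $\sigma\in S_n$ and $I,J\in\mathcal I_\lambda$, $\widetilde W_{\sigma,I}(z_J,z,h)=0$ unless $J\le_\sigma I$.
   Context: Fix $N,n$, $\lambda\in\mathbb Z_{\ge0}^N$ with $\sum\lambda_k=n$; $\lambda^{(k)}=\lambda_1+\dots+\lambda_k$, $\lambda^{\{1\}}=\lambda^{(1)}+\dots+\lambda^{(N-1)}$. $\mathcal I_\lambda$ = ordered partitions $I=(I_1,\dots,I_N)$ of $\{1,\dots,n\}$ with $|I_k|=\lambda_k$; write $I_1\cup\dots\cup I_k=\{i^{(k)}_1<\dots<i^{(k)}_{\lambda^{(k)}}\}$; $\sigma(I)=(\sigma(I_1),\dots,\sigma(I_N))$. Weight functions: variables $t^{(k)}_a$ ($1\le k\le N-1$, $1\le a\le\lambda^{(k)}$), $z_1,\dots,z_n$, $h$; $t^{(N)}_a=z_a$. $U_I=\prod_{k=1}^{N-1}\prod_{a=1}^{\lambda^{(k)}}\Big(\prod_{c:\,i^{(k+1)}_c<i^{(k)}_a}(1-ht^{(k+1)}_c/t^{(k)}_a)\prod_{c:\,i^{(k+1)}_c>i^{(k)}_a}(1-t^{(k+1)}_c/t^{(k)}_a)\prod_{b=a+1}^{\lambda^{(k)}}\frac{1-ht^{(k)}_b/t^{(k)}_a}{1-t^{(k)}_b/t^{(k)}_a}\Big)$ ($c$ ranges in $1..\lambda^{(k+1)}$), $W_I=(1-h)^{\lambda^{\{1\}}}\mathrm{Sym}_{t^{(1)}}\cdots\mathrm{Sym}_{t^{(N-1)}}U_I$ with $\mathrm{Sym}_{t^{(k)}}$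 the sum over all permutations of $t^{(k)}_1,\dots,t^{(k)}_{\lambda^{(k)}}$. $W_{\sigma,I}(t,z,h)=W_{\sigma^{-1}(I)}(t,z_{\sigma(1)},\dots,z_{\sigma(n)},h)$. $E(t,h)=\prod_{k=1}^{N-1}\prod_{a,b=1}^{\lambda^{(k)}}(1-ht^{(k)}_b/t^{(k)}_a)$, $\widetilde W_{\sigma,I}=W_{\sigma,I}/E$. $f(z_J,z,h)$: substitution $t^{(k)}_a=z_{j^{(k)}_a}$, $J_1\cup\dots\cup J_k=\{j^{(k)}_1<\dots\}$ (for $\widetilde W$, this is the Laurent polynomial $W_{\sigma,I}(z_J,z,h)/E(z_J,h)$). Order $\le_\sigma$: with $\sigma^{-1}(I_1\cup\dots\cup I_k)=\{a^k_1<\dots\}$, $\sigma^{-1}(J_1\cup\dots\cup J_k)=\{b^k_1<\dots\}$, $J\le_\sigma I$ iff $b^k_i\le a^k_i$ for all $k=1,\dots,N-1$ and all $i$. *)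

(* Defs.v *)
From HB Require Import structures.
From mathcomp Require Import all_boot all_order all_algebra all_fingroup.
Set Implicit Arguments. Unset Strict Implicit. Unset Printing Implicit Defensive.
Import GRing.Theory.
Local Open Scope ring_scope.

(* Conventions: blocks are 0-based ('I_N), so block k (0-based) is I_{k+1}.
   An ordered partition I = (I_1,...,I_N) of {1..n} is encoded (0-based
   elements) as its block map I : 'I_n -> 'I_N  (i \in I_{k+1} iff I i = k). *)

Definition is_opart (n N : nat) (lam : 'I_N -> nat) (I : 'I_n -> 'I_N) : Prop :=
  forall k : 'I_N, #|[pred i | I i == k]| = lam k.

Definition lamc (N : nat) (lam : 'I_N -> nat) (k : nat) : nat :=
  (\sum_(i < N | (i < k)%N) lam i)%N.

Definition lam1 (N : nat) (lam : 'I_N -> nat) : nat :=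
  (\sum_(1 <= k < N) lamc lam k)%N.

(* sorted list of I_1 \cup ... \cup I_k (0-based elements); its a-th entry
   (0-based a) is i^{(k)}_{a+1} - 1 *)
Definition idx (n N : nat) (I : 'I_n -> 'I_N) (k : nat) : seq nat :=
  map val (filter (fun i => (I i < k)%N) (enum 'I_n)).

Definition ix (n N : nat) (I : 'I_n -> 'I_N) (k a : nat) : nat :=
  nth 0%N (idx I k) a.

Definition permfun (m : nat) (s : 'S_m) (a : nat) : nat :=
  odflt a (omap (fun i : 'I_m => val (s i)) (insub a)).

Section WeightFunctions.
Variable F : fieldType.

(* variables: t k a = t^{(k)}_{a+1}; the level N is t^{(N)}_{a+1} = z_{a+1} *)

Fixpoint symrec (K : nat) (sz : nat -> nat) (f : (nat -> nat -> F) -> F)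
    (t : nat -> nat -> F) : F :=
  match K with
  | 0 => f t
  | K'.+1 => \sum_(s : 'S_(sz K'.+1))
       symrec K' sz f (fun k a => if k == K'.+1 then t k (permfun s a) else t k a)
  end.

Definition Ufun (n N : nat) (lam : 'I_N -> nat) (I : 'I_n -> 'I_N)
    (t : nat -> nat -> F) (h : F) : F :=
  \prod_(1 <= k < N) \prod_(a < lamc lam k)
    ((\prod_(c < lamc lam k.+1 | (ix I k.+1 c < ix I k a)%N)
        (1 - h * t k.+1 c / t k a))
   * (\prod_(c < lamc lam k.+1 | (ix I k a < ix I k.+1 c)%N)
        (1 - t k.+1 c / t k a))
   * (\prod_(a.+1 <= b < lamc lam k)
        ((1 - h * t k b / t k a) / (1 - t k b / t k a)))).

(* W_I(t,z,h), with z stored at level N of t *)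
Definition Wfun (n N : nat) (lam : 'I_N -> nat) (I : 'I_n -> 'I_N)
    (t : nat -> nat -> F) (h : F) : F :=
  (1 - h) ^+ lam1 lam * symrec N.-1 (lamc lam) (fun t' => Ufun lam I t' h) t.

Definition Efun (N : nat) (lam : 'I_N -> nat) (t : nat -> nat -> F) (h : F) : F :=
  \prod_(1 <= k < N) \prod_(a < lamc lam k) \prod_(b < lamc lam k)
    (1 - h * t k b / t k a).

(* value of z at a 0-based nat index (0 out of range; never used out of range) *)
Definition zat (n : nat) (z : 'I_n -> F) (i : nat) : F :=
  odflt 0 (omap z (insub i)).

(* the point (t,z) = (z_J, z_{sigma(1)},...,z_{sigma(n)}):
   t^{(k)}_a = z_{j^{(k)}_a} for k < N, level N holds z o sigma *)
Definition tJsig (n N : nat) (J : 'I_n -> 'I_N) (sigma : 'S_n) (z : 'I_n -> F)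
    (k a : nat) : F :=
  if (k < N)%N then zat z (ix J k a) else zat (fun i => z (sigma i)) a.

(* W~_{sigma,I}(z_J,z,h) = W_{sigma^{-1}(I)}(z_J, z o sigma, h) / E(z_J,h);
   the block map of sigma^{-1}(I) is I o sigma *)
Definition Wtilde_at (n N : nat) (lam : 'I_N -> nat) (sigma : 'S_n)
    (I J : 'I_n -> 'I_N) (z : 'I_n -> F) (h : F) : F :=
  Wfun lam (fun i => I (sigma i)) (tJsig J sigma z) h
  / Efun lam (tJsig J sigma z) h.

End WeightFunctions.

Definition le_sigma (n N : nat) (lam : 'I_N -> nat) (sigma : 'S_n)
    (J I : 'I_n -> 'I_N) : Prop :=
  forall k : nat, (1 <= k < N)%N -> forall i : nat, (i < lamc lam k)%N ->
    (ix (fun x => J (sigma x)) k i <= ix (fun x => I (sigma x)) k i)%N.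

(* Main.v *)
Require Import Defs.
From HB Require Import structures.
From mathcomp Require Import all_boot all_order all_algebra all_fingroup.
From Stdlib Require Import Classical.
From mathcomp Require Import zify.
Import GRing.Theory.

Set Implicit Arguments. Unset Strict Implicit.

Section Helpers.

Lemma permfun_ord m (s : 'S_m) (i : 'I_m) : permfun s i = val (s i).
Proof. rewrite /permfun (insubT (fun x => (x < m)%N) (ltn_ord i)) /=; congr (s _); exact: val_inj. Qed.

Lemma permfun_lt m (s : 'S_m) a : (a < m)%N -> (permfun s a < m)%N.
Proof. move=> am; have -> : a = val (Ordinal am) by []. by rewrite permfun_ord ltn_ord. Qed.

Lemma permfun_inj m (s : 'S_m) a b : (a < m)%N -> (b < m)%N ->
  permfun s a = permfun s b -> a = b.
Proof.
move=> am bm; have -> : a = val (Ordinal am) by [].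
have -> : b = val (Ordinal bm) by [].
rewrite !permfun_ord => /val_inj /perm_inj ->. by [].
Qed.

Lemma permfun_surj m (s : 'S_m) b : (b < m)%N ->
  exists2 a, (a < m)%N & permfun s a = b.
Proof.
move=> bm; exists (nat_of_ord ((s^-1)%g (Ordinal bm))); first exact: ltn_ord.
by rewrite permfun_ord permKV.
Qed.

Lemma permfunK m (s : 'S_m) a : (a < m)%N -> permfun (s^-1)%g (permfun s a) = a.
Proof.
move=> am; have -> : a = val (Ordinal am) by [].
by rewrite !permfun_ord permK.
Qed.

Variables (n N : nat).

Lemma idx_sorted (I : 'I_n -> 'I_N) k : sorted ltn (idx I k).
Proof.
apply: (subseq_sorted ltn_trans _ (iota_ltn_sorted 0 n)).
rewrite -val_enum_ord /idx; apply: map_subseq; exact: filter_subseq.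
Qed.

Lemma idx_uniq (I : 'I_n -> 'I_N) k : uniq (idx I k).
Proof. exact: (sorted_uniq ltn_trans ltnn (idx_sorted I k)). Qed.

Lemma idx_memP (I : 'I_n -> 'I_N) k x :
  x \in idx I k -> exists2 i : 'I_n, x = val i & (I i < k)%N.
Proof.
by rewrite /idx => /mapP [i]; rewrite mem_filter => /andP [Hi _] ->; exists i.
Qed.

Lemma idx_mem (I : 'I_n -> 'I_N) k (i : 'I_n) : (I i < k)%N -> val i \in idx I k.
Proof. by move=> H; rewrite /idx map_f // mem_filter H mem_enum. Qed.

Lemma idx_all (I : 'I_n -> 'I_N) : idx I N = iota 0 n.
Proof.
rewrite /idx -val_enum_ord; congr map.
by rewrite (eq_filter (a2 := predT)) ?filter_predT // => i; rewrite /= ltn_ord.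
Qed.

Lemma idx_size (lam : 'I_N -> nat) (I : 'I_n -> 'I_N) k :
  is_opart lam I -> size (idx I k) = lamc lam k.
Proof.
move=> HI; rewrite /idx size_map size_filter -sum1_count.
rewrite (partition_big I (fun j : 'I_N => (j < k)%N)) //=.
apply: eq_bigr => j jk; rewrite -HI -sum1_card.
have -> : \sum_(i <- enum 'I_n | (I i < k)%N && (I i == j)) 1 =
          \sum_(i | (I i < k)%N && (I i == j)) 1 by rewrite enumT.
apply: eq_bigl => i; rewrite inE; case: eqP => [->|]; by rewrite ?jk ?andbF.
Qed.

Lemma opart_perm (lam : 'I_N -> nat) (I : 'I_n -> 'I_N) (s : 'S_n) :
  is_opart lam I -> is_opart lam (fun i => I (s i)).
Proof.
move=> HI k; rewrite -HI -!sum1_card.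
rewrite (reindex_inj (@perm_inj _ s^-1)%g) /=.
by apply: eq_bigl => i; rewrite !inE permKV.
Qed.

Lemma lamcN (lam : 'I_N -> nat) : lamc lam N = (\sum_(k < N) lam k)%N.
Proof. by rewrite /lamc; apply: eq_bigl => i; rewrite ltn_ord. Qed.

End Helpers.

Lemma nth_bound (s T : seq nat) i M : sorted ltn s -> uniq T -> size T = i.+1 ->
  {subset T <= s} -> (forall y, y \in T -> (y <= M)%N) -> (nth 0 s i <= M)%N.
Proof.
move=> ss uT sT sub bnd; rewrite leqNgt; apply/negP => Hlt.
have sl : sorted leq s by apply: sub_sorted ss => x y; exact: ltnW.
have: {subset T <= take i s}.
  move=> y yT; have ys := sub _ yT.
  have yi := index_mem y s; rewrite ys in yi.
  have hi : (index y s < i)%N.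
    rewrite ltnNge; apply/negP => hle.
    have := bnd _ yT; rewrite -(nth_index 0 ys) => hy.
    have : (nth 0 s i <= nth 0 s (index y s))%N.
      apply: (sorted_leq_nth leq_trans leqnn) => //; rewrite inE //.
      exact: leq_ltn_trans hle yi.
    by move=> HH; have := leq_ltn_trans hy (leq_trans Hlt HH); rewrite ltnn.
  have -> : y = nth 0 s (index y s) by rewrite nth_index.
  rewrite -(nth_take 0 hi); apply: mem_nth.
  rewrite size_take; case: (ltnP i (size s)) => H; lia.
move/(uniq_leq_size uT); rewrite sT size_take; case: (ltnP i (size s)) => H; first by rewrite ltnn.
by rewrite ltnNge H.
Qed.

Lemma prod_zero (R : idomainType) (I : eqType) (r : seq I) (P : pred I)
  (F : I -> R) x : x \in r -> P x -> F x = 0%R -> (\prod_(i <- r | P i) F i = 0)%R.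
Proof.
move=> xr Px Fx; apply/eqP; rewrite prodf_seq_eq0; apply/hasP; exists x => //.
by rewrite Px Fx eqxx.
Qed.

Definition reach (R : Type) (K : nat) (sz : nat -> nat) (t t' : nat -> nat -> R) :=
  exists rho : nat -> nat -> nat,
    [/\ (forall k, (1 <= k <= K)%N -> exists s : 'S_(sz k), rho k =1 permfun s),
        (forall k, ~~ (1 <= k <= K)%N -> rho k =1 id) &
        (forall k a, t' k a = t k (rho k a))].

Lemma symrec0 (R : fieldType) (sz : nat -> nat) (f : (nat -> nat -> R) -> R) K t :
  (forall t', reach K sz t t' -> f t' = 0%R) -> symrec K sz f t = 0%R.
Proof.
elim: K t => [|K IH] t Hf /=.
  apply: Hf; exists (fun _ => id); split => // k; lia.
apply: big1 => s _; apply: IH => t' [rho [H1 H2 H3]]; apply: Hf.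
exists (fun k => if k == K.+1 then permfun s else rho k); split.
- move=> k kK; case: eqP => [->|ne]; first by exists s.
  by apply: H1; lia.
- move=> k kK; case: eqP => [e|ne]; first by lia.
  by apply: H2; lia.
- move=> k a; rewrite H3; case: eqP => [e|ne] //.
  by rewrite H2 //; lia.
Qed.


Lemma zat_ord (R : Type) m (f : 'I_m -> R) (i : 'I_m) (x0 : R) : odflt x0 (omap f (insub (nat_of_ord i))) = f i.
Proof. rewrite (insubT (fun x => (x < m)%N) (ltn_ord i)) /=; congr f; exact: val_inj. Qed.

Section Main.
Variables (F : fieldType) (N n : nat) (lam : 'I_N -> nat).
Hypothesis Hlam : (\sum_(k < N) lam k)%N = n.
Variables (sigma : 'S_n) (I J : 'I_n -> 'I_N).
Hypotheses (HI : is_opart lam I) (HJ : is_opart lam J).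
Variables (z : 'I_n -> F).
Hypothesis Hz0 : forall i, z i != 0%R.
Variable h : F.

Definition vfun (rho : nat -> nat -> nat) k a :=
  if (k < N)%N then ix J k (rho k a) else permfun sigma a.

Lemma main_U t' : reach N.-1 (lamc lam) (tJsig J sigma z) t' ->
  ~ le_sigma lam sigma J I -> Ufun lam (fun i => I (sigma i)) t' h = 0%R.
Proof.
move=> [rho [H1 H2 H3]] Hnot.
have HIs := opart_perm sigma HI.
have sizeJ k : size (idx J k) = lamc lam k by exact: idx_size.
have sizeIs k : size (idx (fun i => I (sigma i)) k) = lamc lam k by exact: idx_size.
have lN : lamc lam N = n by rewrite lamcN.
have rhoN : rho N =1 id by apply: H2; apply/andP; case=> ? ?; lia.
have Hrho k a : (1 <= k < N)%N -> (a < lamc lam k)%N -> (rho k a < lamc lam k)%N.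
  move=> /andP [k1 kN] ha; have [s Hs] : exists s : 'S_(lamc lam k), rho k =1 permfun s.
    by apply: H1; rewrite k1 /=; lia.
  by rewrite Hs permfun_lt.
have memJ k a : (1 <= k < N)%N -> (a < lamc lam k)%N -> ix J k (rho k a) \in idx J k.
  by move=> hk ha; apply: mem_nth; rewrite sizeJ Hrho.
have vlt k a : (1 <= k <= N)%N -> (a < lamc lam k)%N -> (vfun rho k a < n)%N.
  move=> /andP [k1 kN] ha; rewrite /vfun; case: (ltnP k N) => hk.
    have /idx_memP [y -> _] := memJ k a (introT andP (conj k1 hk)) ha; exact: ltn_ord.
  have ek : k = N by lia.
  by subst k; rewrite lN in ha; rewrite permfun_lt.
have tv k a : (1 <= k <= N)%N -> (a < lamc lam k)%N -> t' k a = zat z (vfun rho k a).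
  move=> /andP [k1 kN] ha; rewrite H3 /tJsig /vfun; case: (ltnP k N) => hk //.
  have ek : k = N by lia.
  subst k; rewrite rhoN /=; rewrite lN in ha.
  have -> : a = nat_of_ord (Ordinal ha) by [].
  by rewrite /zat zat_ord permfun_ord zat_ord.
have znz x : (x < n)%N -> zat z x != 0%R.
  by move=> xn; have -> : x = nat_of_ord (Ordinal xn) by []; rewrite /zat zat_ord.
case: (classic (Ufun lam (fun i => I (sigma i)) t' h = 0%R)) => // HU.
exfalso; apply: Hnot.
have Hno k a c : (1 <= k < N)%N -> (a < lamc lam k)%N -> (c < lamc lam k.+1)%N ->
    vfun rho k.+1 c = vfun rho k a ->
    (ix (fun i => I (sigma i)) k.+1 c <= ix (fun i => I (sigma i)) k a)%N.
  move=> hk ha hc Ev; rewrite leqNgt; apply/negP => hlt; apply: HU.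
  rewrite /Ufun; apply: (prod_zero (x:=k)) => //; first by rewrite mem_index_iota.
  apply: (prod_zero (x := Ordinal ha)) => //; first exact: mem_index_enum.
  apply/eqP; rewrite !mulf_eq0; apply/orP; left; apply/orP; right; apply/eqP.
  apply: (prod_zero (x := Ordinal hc)) => //=; first exact: mem_index_enum.
  have hk' : (1 <= k <= N)%N by lia.
  have hk'' : (1 <= k.+1 <= N)%N by lia.
  rewrite (tv k.+1 c) // (tv k a) // Ev divff ?subrr //.
  by apply: znz; apply: vlt.
have Hex k a : (1 <= k < N)%N -> (a < lamc lam k)%N ->
    exists2 c, (c < lamc lam k.+1)%N & vfun rho k.+1 c = vfun rho k a.
  move=> hk ha; have mem := memJ k a hk ha.
  have [k1 kN] : (1 <= k)%N /\ (k < N)%N by apply/andP.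
  case: (idx_memP mem) => y Ey Jy.
  have Ev : vfun rho k a = val y by rewrite /vfun kN.
  rewrite Ev; case: (ltnP k.+1 N) => hk1.
    have mem2 : val y \in idx J k.+1 by apply: idx_mem; exact: leqW.
    have hb : (index (val y) (idx J k.+1) < lamc lam k.+1)%N by rewrite -sizeJ index_mem.
    have [s' Hs'] : exists s : 'S_(lamc lam k.+1), rho k.+1 =1 permfun s.
      by apply: H1; lia.
    have [c hc Ec] := permfun_surj s' hb.
    exists c => //; rewrite /vfun hk1 /ix Hs' Ec nth_index //.
  have ek : k.+1 = N by lia.
  exists (permfun (sigma^-1)%g (val y)).
    by rewrite ek lN; apply: permfun_lt; exact: ltn_ord.
  rewrite /vfun ek ltnn.
  have := permfunK (sigma^-1)%g (ltn_ord y); rewrite invgK; exact.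
have claim d : forall k a, (k + d = N)%N -> (1 <= k)%N -> (a < lamc lam k)%N ->
    (permfun (sigma^-1)%g (vfun rho k a) <= ix (fun i => I (sigma i)) k a)%N.
  elim: d => [|d IH] k a ekd k1 ha.
    rewrite addn0 in ekd; subst k; rewrite lN in ha.
    rewrite /vfun ltnn permfunK // /ix idx_all nth_iota //.
  have hk : (1 <= k < N)%N by lia.
  have [c hc Ec] := Hex k a hk ha.
  rewrite -Ec; apply: leq_trans (Hno k a c hk ha hc Ec).
  by apply: IH => //; lia.
move=> k hk i hi.
have [k1 kN] : (1 <= k)%N /\ (k < N)%N by apply/andP.
apply: (nth_bound (T := map (fun a => permfun (sigma^-1)%g (vfun rho k a)) (iota 0 i.+1))).
- exact: idx_sorted.
- rewrite map_inj_in_uniq ?iota_uniq // => a b; rewrite !mem_iota /= => ha hb E.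
  have ha' : (a < lamc lam k)%N by lia.
  have hb' : (b < lamc lam k)%N by lia.
  have hk' : (1 <= k <= N)%N by lia.
  move/(permfun_inj (vlt k a hk' ha') (vlt k b hk' hb')): E.
  rewrite /vfun kN /ix => /eqP; rewrite nth_uniq ?sizeJ ?Hrho ?idx_uniq // => /eqP.
  have [s Hs] : exists s : 'S_(lamc lam k), rho k =1 permfun s.
    by apply: H1; lia.
  by rewrite !Hs; apply: permfun_inj.
- by rewrite size_map size_iota.
- move=> y /mapP [a]; rewrite mem_iota /= => ha ->.
  have ha' : (a < lamc lam k)%N by lia.
  case: (idx_memP (memJ k a hk ha')) => x Ex Jx.
  rewrite /vfun kN Ex permfun_ord; apply: idx_mem; by rewrite permKV.
- move=> y /mapP [a]; rewrite mem_iota /= => ha ->.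
  have ha' : (a < lamc lam k)%N by lia.
  apply: leq_trans (claim (N - k) k a _ k1 ha') _; first by lia.
  have sl : sorted leq (idx (fun i => I (sigma i)) k).
    by apply: sub_sorted (idx_sorted _ k) => x0 y0; exact: ltnW.
  apply: (sorted_leq_nth leq_trans leqnn) => //; rewrite inE sizeIs //; lia.
Qed.

End Main.

Local Open Scope ring_scope.

Theorem lemma6p2 (F : fieldType) (N n : nat) (lam : 'I_N -> nat)
    (Hlam : (\sum_(k < N) lam k)%N = n)
    (sigma : 'S_n) (I J : 'I_n -> 'I_N)
    (HI : is_opart lam I) (HJ : is_opart lam J)
    (z : 'I_n -> F) (Hzinj : injective z) (Hz0 : forall i, z i != 0)
    (h : F) :
  ~ le_sigma lam sigma J I -> Wtilde_at lam sigma I J z h = 0.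
Proof.
move=> Hnot; rewrite /Wtilde_at /Wfun symrec0 ?mulr0 ?mul0r //.
move=> t' Hr; exact: main_U Hr Hnot.
Qed.
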